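(* For every interaction matrix $K\in[0,1]^{d\times d}$ there exists $a_0>0$ such that every discrete time regulatory network with interaction matrix $K$ (and any compatible threshold and activation matrices) and contraction rate $a\in[0,a_0)$ satisfies coordinatewise injectivity.
   Context: An interaction matrix is $K\in[0,1]^{d\times d}$ with $\sum_iK_{i,j}=1$ for each $j$; a compatible activation matrix $s\in\{-1,0,1\}^{d\times d}$ and threshold matrix $T\in[0,1]^{d\times d}$ satisfy $s_{i,j}=0$ iff $K_{i,j}=0$ and $T_{i,j}=0$ iff $K_{i,j}=0$. The network with contraction rate $a\in[0,1]$ is $F(x)_j=ax_j+(1-a)\sum_iK_{i,j}H(s_{i,j}(x_i-T_{i,j}))$ on $[0,1]^d$, with $H(x)=0$ for $x\le 0$ and $1$ otherwise. For each $j$ let $\mathcal F_j=\{x\mapsto ax+(1-a)\sum_{i=1}^d\epsilon_iK_{i,j}:\ \epsilon\in\{0,1\}^d\}$, maps $[0,1]\to[0,1]$. The network satisfies coordinatewise injectivity if for each $j$ and all $f,f'\in\mathcal F_j$ with $f\ne f'$, $f([0,1])\cap f'([0,1])=\emptyset$. *)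

(* Defs.v *)
From HB Require Import structures.
From mathcomp Require Import all_boot all_order all_algebra.
From mathcomp Require Import reals.
Set Implicit Arguments. Unset Strict Implicit. Unset Printing Implicit Defensive.
Import Order.TTheory GRing.Theory Num.Theory.
Local Open Scope ring_scope.

Section Defs.
Variables (R : realType) (d : nat).

Definition interaction_matrix (K : 'M[R]_d) : Prop :=
  (forall i j, 0 <= K i j <= 1) /\ (forall j, \sum_(i < d) K i j = 1).

Definition compatible (K : 'M[R]_d) (s : 'M[int]_d) (T : 'M[R]_d) : Prop :=
  (forall i j, s i j = -1 \/ s i j = 0 \/ s i j = 1) /\
  (forall i j, 0 <= T i j <= 1) /\
  (forall i j, s i j = 0 <-> K i j = 0) /\
  (forall i j, T i j = 0 <-> K i j = 0).

Definition Heav (x : R) : R := if x <= 0 then 0 else 1.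

Definition network (K : 'M[R]_d) (s : 'M[int]_d) (T : 'M[R]_d) (a : R)
  (x : 'I_d -> R) (j : 'I_d) : R :=
  a * x j + (1 - a) * \sum_(i < d) K i j * Heav ((s i j)%:~R * (x i - T i j)).

Definition Ffam (K : 'M[R]_d) (a : R) (j : 'I_d) (f : R -> R) : Prop :=
  exists eps : 'I_d -> bool,
    f = (fun x => a * x + (1 - a) * \sum_(i < d) (eps i)%:R * K i j).

Definition coord_injective (K : 'M[R]_d) (a : R) : Prop :=
  forall (j : 'I_d) (f f' : R -> R), Ffam K a j f -> Ffam K a j f' -> f <> f' ->
    forall x y : R, 0 <= x <= 1 -> 0 <= y <= 1 -> f x <> f' y.

End Defs.

(* Main.v *)
Require Import Defs.
From HB Require Import structures.
From mathcomp Require Import all_boot all_order all_algebra.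
From mathcomp Require Import reals.
From mathcomp Require Import lra.
Import Order.TTheory GRing.Theory Num.Theory.
Local Open Scope ring_scope.

Lemma bigmin_le_mem (R : realType) (I : eqType) (r : seq I) (F : I -> R) i0 :
  i0 \in r -> \big[Num.min/1]_(i <- r) F i <= F i0.
Proof.
elim: r => [//|x r IH]; rewrite inE big_cons => /orP[/eqP->|/IH h].
  by rewrite ge_min lexx.
by rewrite ge_min h orbT.
Qed.

Lemma bigmin_pos (R : realType) (I : Type) (r : seq I) (F : I -> R) :
  (forall i, 0 < F i <= 1) -> 0 < \big[Num.min/1]_(i <- r) F i <= 1.
Proof.
move=> H; apply: (big_ind (fun x => 0 < x <= 1)) => //.
  by rewrite ltr01 lexx.
move=> x y /andP[x0 x1] /andP[y0 y1].
by rewrite lt_min x0 y0 ge_min x1.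
Qed.

Theorem mainTheorem5 (R : realType) (d : nat) (K : 'M[R]_d) :
  interaction_matrix K ->
  exists a0 : R, 0 < a0 /\
    forall (a : R), 0 <= a -> a <= 1 -> a < a0 ->
    forall (s : 'M[int]_d) (T : 'M[R]_d), compatible K s T ->
      coord_injective K a.
Proof.
move=> _.
pose c (e : {ffun 'I_d -> bool}) (j : 'I_d) : R := \sum_(i < d) (e i)%:R * K i j.
pose G (j : 'I_d) e1 e2 : R := if c e1 j == c e2 j then 1 else Num.min `|c e1 j - c e2 j| 1.
have Gpos : forall j e1 e2, 0 < G j e1 e2 <= 1.
  move=> j e1 e2; rewrite /G; case: eqP => h; first by rewrite ltr01 lexx.
  rewrite lt_min ge_min lexx orbT ltr01 andbT andbT normr_gt0 subr_eq0.
  by apply/eqP.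
pose delta : R := \big[Num.min/1]_(j <- index_enum 'I_d)
   \big[Num.min/1]_(e1 <- index_enum {ffun 'I_d -> bool})
   \big[Num.min/1]_(e2 <- index_enum {ffun 'I_d -> bool}) G j e1 e2.
have dpos : 0 < delta <= 1.
  apply: bigmin_pos => j; apply: bigmin_pos => e1; exact: bigmin_pos.
have dle : forall j e1 e2, delta <= G j e1 e2.
  move=> j e1 e2.
  rewrite /delta.
  apply: le_trans; first by apply: (@bigmin_le_mem _ _ _ _ j); exact: mem_index_enum.
  apply: le_trans; first by apply: (@bigmin_le_mem _ _ _ _ e1); exact: mem_index_enum.
  by apply: (@bigmin_le_mem _ _ _ _ e2); exact: mem_index_enum.
case/andP: dpos => d0 d1.
exists (delta / 2); split; first by lra.
move=> a a0 a1 aD s T _ j f f' [eps ->] [eps' ->] neq x y /andP[x0 x1] /andP[y0 y1].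
have E : forall (ep : 'I_d -> bool),
   \sum_(i < d) (ep i)%:R * K i j = c [ffun i => ep i] j.
  by move=> ep; rewrite /c; apply: eq_bigr => i _; rewrite ffunE.
rewrite !E.
set c1 := c _ j; set c2 := c _ j.
have hG := dle j [ffun i => eps i] [ffun i => eps' i].
rewrite /G -/c1 -/c2 in hG.
case: eqP hG => [h|h] hG.
  by exfalso; apply: neq; rewrite !E -/c1 -/c2 h.
have hn : delta <= `|c1 - c2|.
  by apply: le_trans hG _; rewrite ge_min lexx.
move=> eq.
have : (1 - a) * (c1 - c2) = a * (y - x) by lra.
move: hn; case: (lerP 0 (c1 - c2)) => hs.
  rewrite ger0_norm // => hn eq2.
  have : (1 - a) * (c1 - c2 - delta) >= 0 by apply: mulr_ge0; lra.
  have : a * (1 - y + x) >= 0 by apply: mulr_ge0; lra.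
  nra.
rewrite ltr0_norm // => hn eq2.
have : (1 - a) * (c2 - c1 - delta) >= 0 by apply: mulr_ge0; lra.
have : a * (1 - x + y) >= 0 by apply: mulr_ge0; lra.
nra.
Qed.
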